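(* Let $1/n<\gamma\ll\tau\ll\varepsilon<1$ be constants, let $k\geq 2$ be an integer, and let $G$ be a $d$-regular oriented graph on $n$ vertices with $d\geq(1/4+\varepsilon)n$. Let $\mathcal{P}_k=\{V_{ij}:i,j\in[k]\}$ be a $(k^2,\tau,\gamma)$-partition of $G$. Then for every $i\in[k]$, $$\Big|\bigcup_{j\neq i}V_{ij}\Big|\geq\tau n\quad\text{and}\quad\Big|\bigcup_{j\neq i}V_{ji}\Big|\geq\tau n.$$
   Context: Hierarchy convention: $x\ll y$ means $x\leq f(y)$ for some implicitly given non-decreasing function $f:(0,1]\to(0,1]$; the statement asserts such functions exist, constants chosen from right to left. An oriented graph has at most one edge between any two vertices; $d$-regular means all in- and outdegrees equal $d$. A $k^2$-partition of $V(G)$ is a family $\{V_{ij}:i,j\in[k]\}$ of pairwise disjoint (possibly empty) sets with union $V(G)$; $V_{i*}=\bigcup_j V_{ij}$, $V_{*j}=\bigcup_i V_{ij}$. $E(A,B)$ is the set of edges $ab$ with $a\in A,b\in B$; bad edges $\mathcal{B}_k(\mathcal{P}_k,G)=\bigcup_{i\neq j}E(V_{i*},V_{*j})$. A $(k^2,\tau,\gamma)$-partition is a $k^2$-partition with $|\mathcal{B}_k(\mathcal{P}_k,G)|\leq\gamma n^2$ and $|V_{i*}|,|V_{*j}|\geq\tau n$ for all $i,j\in[k]$. *)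

(* Defs.v *)
From HB Require Import structures.
From mathcomp Require Import all_boot all_order all_algebra.
Set Implicit Arguments. Unset Strict Implicit. Unset Printing Implicit Defensive.
Import Order.TTheory GRing.Theory Num.Theory.

Definition oriented (n : nat) (G : rel 'I_n) : Prop :=
  (forall x, ~~ G x x) /\ (forall x y, ~~ (G x y && G y x)).

Definition outdeg (n : nat) (G : rel 'I_n) (v : 'I_n) : nat := #|[set u | G v u]|.
Definition indeg (n : nat) (G : rel 'I_n) (v : 'I_n) : nat := #|[set u | G u v]|.

Definition regular (n : nat) (G : rel 'I_n) (d : nat) : Prop :=
  forall v, outdeg G v = d /\ indeg G v = d.

Definition k2_partition (n k : nat) (V : 'I_k -> 'I_k -> {set 'I_n}) : Prop :=
  (forall i j i' j', (i, j) != (i', j') -> [disjoint V i j & V i' j']) /\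
  (\bigcup_(i < k) \bigcup_(j < k) V i j = [set: 'I_n]).

Definition Vrow (n k : nat) (V : 'I_k -> 'I_k -> {set 'I_n}) (i : 'I_k) : {set 'I_n} :=
  \bigcup_(j < k) V i j.
Definition Vcol (n k : nat) (V : 'I_k -> 'I_k -> {set 'I_n}) (j : 'I_k) : {set 'I_n} :=
  \bigcup_(i < k) V i j.

Definition bad_edges (n k : nat) (V : 'I_k -> 'I_k -> {set 'I_n}) (G : rel 'I_n)
  : {set 'I_n * 'I_n} :=
  [set e | G e.1 e.2 &&
     [exists i : 'I_k, exists j : 'I_k,
        [&& i != j, e.1 \in Vrow V i & e.2 \in Vcol V j]]].

Definition ktg_partition (R : numDomainType) (n k : nat) (tau gam : R)
  (G : rel 'I_n) (V : 'I_k -> 'I_k -> {set 'I_n}) : Prop :=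
  [/\ k2_partition V,
      (#|bad_edges V G|%:R <= gam * (n%:R ^+ 2))%R,
      (forall i, tau * n%:R <= #|Vrow V i|%:R)%R &
      (forall j, tau * n%:R <= #|Vcol V j|%:R)%R].

(* Main.v *)
Require Import Defs.
From HB Require Import structures.
From mathcomp Require Import all_boot all_order all_algebra.
From mathcomp Require Import zify ring lra.
Import Order.TTheory GRing.Theory Num.Theory.
Set Implicit Arguments. Unset Strict Implicit.

Definition E (n : nat) (G : rel 'I_n) (X Y : {set 'I_n}) : nat :=
  \sum_(x : 'I_n) \sum_(y : 'I_n) ((x \in X) && (y \in Y) && G x y : nat).
Arguments E {n}.

Lemma E_split_r n (G : rel 'I_n) X Y Z : E G X Y = E G X (Y :&: Z) + E G X (Y :\: Z).
Proof.
rewrite /E -big_split; apply: eq_bigr => x _; rewrite -big_split; apply: eq_bigr => y _.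
rewrite !inE; by case: (x \in X); case: (y \in Y); case: (y \in Z); case: (G x y).
Qed.

Lemma E_split_l n (G : rel 'I_n) X Y Z : E G X Y = E G (X :&: Z) Y + E G (X :\: Z) Y.
Proof.
rewrite /E -big_split; apply: eq_bigr => x _; rewrite -big_split; apply: eq_bigr => y _.
rewrite !inE; by case: (x \in X); case: (y \in Y); case: (x \in Z); case: (G x y).
Qed.

Lemma E_mono n (G : rel 'I_n) (X Y X' Y' : {set 'I_n}) : X \subset X' -> Y \subset Y' -> E G X Y <= E G X' Y'.
Proof.
move=> /subsetP sX /subsetP sY.
apply: leq_sum => x _; apply: leq_sum => y _.
case hx: (x \in X); case hy: (y \in Y) => //=.
by rewrite (sX _ hx) (sY _ hy).
Qed.

Lemma card_prodE n (X Y : {set 'I_n}) :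
  #|X| * #|Y| = \sum_(x : 'I_n) \sum_(y : 'I_n) ((x \in X) && (y \in Y) : nat).
Proof.
  rewrite -sum1_card big_distrl /= big_mkcond /=; apply: eq_bigr => x _.
  rewrite -sum1_card big_mkcond /=.
  case: (x \in X) => /=; last by rewrite big1.
  by rewrite mul1n; apply: eq_bigr => y _; case: (y \in Y).
Qed.

Lemma E_le_card n (G : rel 'I_n) X Y : E G X Y <= #|X| * #|Y|.
Proof.
rewrite card_prodE.
apply: leq_sum => x _; apply: leq_sum => y _.
by case: (x \in X); case: (y \in Y); case: (G x y).
Qed.

Lemma E_diag n (G : rel 'I_n) X : oriented G -> 2 * E G X X <= #|X| * #|X|.
Proof.
move=> [_ hor].
rewrite card_prodE.
rewrite mul2n -addnn {2}/E exchange_big /= /E -big_split /=.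
apply: leq_sum => x _; rewrite -big_split /=; apply: leq_sum => y _.
have := hor x y.
by case: (x \in X); case: (y \in X); case: (G x y); case: (G y x).
Qed.

Lemma E_outT n (G : rel 'I_n) d (X : {set 'I_n}) : regular G d -> E G X [set: 'I_n] = d * #|X|.
Proof.
move=> hr.
rewrite /E -sum1_card big_distrr /= [RHS]big_mkcond /=; apply: eq_bigr => x _.
case: (x \in X) => /=; last by rewrite big1.
rewrite muln1 -(proj1 (hr x)) /outdeg -sum1_card [RHS]big_mkcond /=.
by apply: eq_bigr => y _; rewrite !inE; case: (G x y).
Qed.

Lemma E_inT n (G : rel 'I_n) d (Y : {set 'I_n}) : regular G d -> E G [set: 'I_n] Y = d * #|Y|.
Proof.
move=> hr.
rewrite /E exchange_big -sum1_card big_distrr /= [RHS]big_mkcond /=; apply: eq_bigr => y _.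
case: (y \in Y) => /=; last by rewrite big1 // => x _; rewrite andbF.
rewrite muln1 -(proj2 (hr y)) /indeg -sum1_card [RHS]big_mkcond /=.
by apply: eq_bigr => x _; rewrite !inE; case: (G x y).
Qed.

Lemma cover_ex n k (V : 'I_k -> 'I_k -> {set 'I_n}) y :
  k2_partition V -> exists i j, y \in V i j.
Proof.
move=> [_ hc]; have : y \in [set: 'I_n] by rewrite inE.
rewrite -hc => /bigcupP [i _ /bigcupP [j _ h]]; by exists i, j.
Qed.

Lemma in_row n k (V : 'I_k -> 'I_k -> {set 'I_n}) i j y : y \in V i j -> y \in Vrow V i.
Proof. by move=> h; apply/bigcupP; exists j. Qed.
Lemma in_col n k (V : 'I_k -> 'I_k -> {set 'I_n}) i j y : y \in V i j -> y \in Vcol V j.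
Proof. by move=> h; apply/bigcupP; exists i. Qed.

Lemma E_bad n k (G : rel 'I_n) (V : 'I_k -> 'I_k -> {set 'I_n}) i :
  k2_partition V ->
  E G (Vrow V i) (~: Vcol V i) + E G (~: Vrow V i) (Vcol V i) <= #|bad_edges V G|.
Proof.
move=> hp.
rewrite -sum1_card big_mkcond /=.
have -> : \sum_(p : 'I_n * 'I_n) (if p \in bad_edges V G then 1 else 0) =
  \sum_(x : 'I_n) \sum_(y : 'I_n) (if (x, y) \in bad_edges V G then 1 else 0).
  by rewrite pair_bigA; apply: eq_bigr => -[].
rewrite /E -big_split /=; apply: leq_sum => x _; rewrite -big_split /=; apply: leq_sum => y _.
rewrite !inE /=.
case hG: (G x y); rewrite ?andbF ?andbT //=.
case hx: (x \in Vrow V i); case hy: (y \in Vcol V i) => //=.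
- have [i' [j' hj]] := cover_ex y hp.
  have hj' : j' != i by apply/eqP => e; move: hy; rewrite -e (in_col hj).
  case: existsP => // - []; exists i; apply/existsP; exists j'.
  by rewrite eq_sym hj' hx (in_col hj).
- have [i' [j' hj]] := cover_ex x hp.
  have hj' : i' != i by apply/eqP => e; move: hx; rewrite -e (in_row hj).
  case: existsP => // - []; exists i'; apply/existsP; exists i.
  by rewrite hj' hy (in_row hj).
Qed.

Lemma uniq_cell n k (V : 'I_k -> 'I_k -> {set 'I_n}) i j i' j' x :
  k2_partition V -> x \in V i j -> x \in V i' j' -> i = i' /\ j = j'.
Proof.
move=> [hd _] h1 h2.
case: (eqVneq (i, j) (i', j')) => [[-> ->] //|ne].
have := hd _ _ _ _ ne; rewrite disjoint_subset => /subsetP /(_ x h1).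
by rewrite inE h2.
Qed.

Lemma rows_disj n k (V : 'I_k -> 'I_k -> {set 'I_n}) i i' x :
  k2_partition V -> i != i' -> x \in Vrow V i -> x \in Vrow V i' -> False.
Proof.
move=> hp ne /bigcupP [j _ h1] /bigcupP [j' _ h2].
have [e _] := uniq_cell hp h1 h2; by rewrite e eqxx in ne.
Qed.

Lemma diff_row n k (V : 'I_k -> 'I_k -> {set 'I_n}) i :
  k2_partition V -> \bigcup_(j < k | j != i) V i j = Vrow V i :\: Vcol V i.
Proof.
move=> hp; apply/setP => x; rewrite inE; apply/bigcupP/andP.
- move=> [j hj h]; split; last exact: in_row h.
  apply/negP => /bigcupP [i' _ h'].
  have [_ e] := uniq_cell hp h h'; by rewrite e eqxx in hj.
- move=> [hn /bigcupP [j _ h]]; exists j => //.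
  apply/eqP => e; move: hn; by rewrite -{1}e (in_col h).
Qed.

Lemma diff_col n k (V : 'I_k -> 'I_k -> {set 'I_n}) i :
  k2_partition V -> \bigcup_(j < k | j != i) V j i = Vcol V i :\: Vrow V i.
Proof.
move=> hp; apply/setP => x; rewrite inE; apply/bigcupP/andP.
- move=> [j hj h]; split; last exact: in_col h.
  apply/negP => /bigcupP [i' _ h'].
  have [e _] := uniq_cell hp h h'; by rewrite e eqxx in hj.
- move=> [hn /bigcupP [j _ h]]; exists j => //.
  apply/eqP => e; move: hn; by rewrite -{1}e (in_row h).
Qed.


Lemma deg_S n (G : rel 'I_n) d (R C : {set 'I_n}) : oriented G -> regular G d ->
  2 * d * #|R :&: C| <= #|R :&: C| * #|R :&: C| + d * (#|R :\: C| + #|C :\: R|)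
     + E G R (~: C) + E G (~: R) C.
Proof.
move=> hor hreg.
set S := R :&: C.
have e1 := E_outT S hreg.
have e2 := E_inT S hreg.
rewrite (E_split_r G S [set: 'I_n] S) setTI (E_split_r G S ([set: 'I_n] :\: S) C) in e1.
rewrite (E_split_l G [set: 'I_n] S S) setTI (E_split_l G ([set: 'I_n] :\: S) S R) in e2.
have h1 : E G S (([set: 'I_n] :\: S) :&: C) <= d * #|C :\: R|.
  rewrite -(E_inT _ hreg); apply: E_mono; first exact: subsetT.
  apply/subsetP => x; rewrite !inE; by case: (x \in R); case: (x \in C).
have h2 : E G S (([set: 'I_n] :\: S) :\: C) <= E G R (~: C).
  apply: E_mono; first by apply/subsetP => x; rewrite !inE => /andP [].
  apply/subsetP => x; rewrite !inE; by case: (x \in R); case: (x \in C).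
have h3 : E G (([set: 'I_n] :\: S) :&: R) S <= d * #|R :\: C|.
  rewrite -(E_outT _ hreg); apply: E_mono; last exact: subsetT.
  apply/subsetP => x; rewrite !inE; by case: (x \in R); case: (x \in C).
have h4 : E G (([set: 'I_n] :\: S) :\: R) S <= E G (~: R) C.
  apply: E_mono; last by apply/subsetP => x; rewrite !inE => /andP [].
  apply/subsetP => x; rewrite !inE; by case: (x \in R); case: (x \in C).
have h5 := E_diag S hor.
lia.
Qed.

Lemma deg_T n (G : rel 'I_n) d (R C : {set 'I_n}) : oriented G -> regular G d ->
  2 * d * #|~: (R :|: C)| <= #|~: (R :|: C)| * #|~: (R :|: C)| + d * (#|R :\: C| + #|C :\: R|)
     + E G R (~: C) + E G (~: R) C.
Proof.
move=> hor hreg.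
set S := ~: (R :|: C).
have e1 := E_outT S hreg.
have e2 := E_inT S hreg.
rewrite (E_split_r G S [set: 'I_n] S) setTI (E_split_r G S ([set: 'I_n] :\: S) C) in e1.
rewrite (E_split_l G [set: 'I_n] S S) setTI (E_split_l G ([set: 'I_n] :\: S) S R) in e2.
have h1 : E G S (([set: 'I_n] :\: S) :&: C) <= E G (~: R) C.
  apply: E_mono.
    apply/subsetP => x; rewrite !inE; by case: (x \in R); case: (x \in C).
  by apply/subsetP => x; rewrite !inE => /andP [].
have h2 : E G S (([set: 'I_n] :\: S) :\: C) <= d * #|R :\: C|.
  rewrite -(E_inT _ hreg); apply: E_mono; first exact: subsetT.
  apply/subsetP => x; rewrite !inE; by case: (x \in R); case: (x \in C).
have h3 : E G (([set: 'I_n] :\: S) :&: R) S <= E G R (~: C).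
  apply: E_mono; first by apply/subsetP => x; rewrite !inE => /andP [].
  apply/subsetP => x; rewrite !inE; by case: (x \in R); case: (x \in C).
have h4 : E G (([set: 'I_n] :\: S) :\: R) S <= d * #|C :\: R|.
  rewrite -(E_outT _ hreg); apply: E_mono; last exact: subsetT.
  apply/subsetP => x; rewrite !inE; by case: (x \in R); case: (x \in C).
have h5 := E_diag S hor.
lia.
Qed.


Local Open Scope ring_scope.

Lemma stepR (R : realFieldType) (tau g n d r c x z : R) :
  0 < tau -> 0 <= g -> 0 < n -> tau * n <= c -> x + z = d * c -> x <= r * c -> z <= g * n ^+ 2 ->
  tau * d - g * n <= tau * r.
Proof.
move=> ht hg hn hc e hx hz.
have h1 : (d - r) * c <= g * (n * n) by rewrite expr2 in hz; rewrite mulrBl; lra.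
case: (lerP (d - r) 0) => h2.
  have : 0 <= tau * (r - d) by apply: mulr_ge0; lra.
  have : 0 <= g * n by apply: mulr_ge0; lra.
  nra.
have h3 : (d - r) * (tau * n) <= (d - r) * c by apply: ler_wpM2l; lra.
have h4 : ((d - r) * tau - g * n) * n <= 0 by nra.
have h5 : (d - r) * tau - g * n <= 0.
  rewrite leNgt; apply/negP => h6.
  have : 0 < ((d - r) * tau - g * n) * n by apply: mulr_gt0.
  lra.
nra.
Qed.

Lemma stepS (R : realFieldType) (s d n tau err : R) :
  0 < tau -> 0 < n -> n / 5 <= s -> 2 * d * s <= s * s + err -> err <= 21 / 10 * tau * n * n ->
  2 * d - 21 / 2 * tau * n <= s.
Proof.
move=> ht hn hs h1 h2;
have htn : 0 < tau * n by apply: mulr_gt0.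
 rewrite leNgt; apply/negP => h.
have h3 : n / 5 * (2 * d - s) <= s * (2 * d - s) by apply: ler_wpM2r; lra.
have h4 : 0 < n / 5 * (2 * d - s - 21 / 2 * tau * n) by apply: mulr_gt0; lra.
have e1 : s * (2 * d - s) = 2 * d * s - s * s by ring.
have e2 : n / 5 * (2 * d - s - 21 / 2 * tau * n) = n / 5 * (2 * d - s) - 21 / 10 * tau * n * n by field.
lra.
Qed.

Lemma stepAB (R : realFieldType) (n d a b y z gn : R) :
  0 < n -> n / 4 <= d -> d * (b - a) = z - y -> 0 <= y -> 0 <= z -> y + z <= gn * n ->
  b <= a + 4 * gn.
Proof.
move=> hn hd e hy hz hyz.
case: (lerP b a) => hab.
  have : 0 <= gn.
    rewrite leNgt; apply/negP => h.
    have : gn * n < 0 by rewrite pmulr_llt0.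
    lra.
  lra.
have h2 : d * (b - a) <= gn * n by lra.
have h3 : n / 4 * (b - a) <= d * (b - a) by apply: ler_wpM2r; lra.
have h4 : n / 4 * (b - a - 4 * gn) <= 0.
  have -> : n / 4 * (b - a - 4 * gn) = n / 4 * (b - a) - gn * n by field.
  lra.
have : b - a - 4 * gn <= 0.
  rewrite leNgt; apply/negP => h5.
  have : 0 < n / 4 * (b - a - 4 * gn) by apply: mulr_gt0; lra.
  lra.
lra.
Qed.

(* tn = tau*n, gn = g*n, en = eps*n *)
Lemma stepLow (R : realFieldType) (tau d r a s tn gn: R) :
  0 < tau -> tau * r >= tau * d - gn -> gn <= tau * tn / 100 -> r = s + a ->
  d - tn / 100 - a <= s.
Proof.
move=> ht hR hg hr.
have : 0 <= tau * (s - d + tn / 100 + a).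
  have -> : tau * (s - d + tn / 100 + a) = tau * r - tau * d + tau * tn / 100 by rewrite hr; ring.
  lra.
rewrite pmulr_rge0 //; lra.
Qed.

Lemma stepErr (R : realFieldType) (n d a b y z tn gn m : R) :
  0 < n -> 0 < tn -> d <= n -> 0 <= a -> 0 <= b -> a < m -> b < m -> m = tn + 4 * gn ->
  gn <= tn / 10000 -> y + z <= gn * n ->
  d * (a + b) + y + z <= 21 / 10 * tn * n.
Proof.
move=> hn htn hdn ha hb hA hB hm hgn hyz.
have hab : 0 <= a + b by apply: addr_ge0.
have hab2 : a + b <= 2 * m by clear -hA hB; lra.
have h1 : d * (a + b) <= n * (a + b) by apply: ler_wpM2r.
have h2 : n * (a + b) <= n * (2 * m) by apply: ler_wpM2l => //; apply: ltW.
have h3 : gn * n <= tn / 10000 * n by apply: ler_wpM2r => //; apply: ltW.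
have e1 : n * (2 * m) = 2 * (tn * n) + 8 * (gn * n) by rewrite hm; ring.
have e2 : tn / 10000 * n = tn * n / 10000 by ring.
have e3 : 21 / 10 * tn * n = 21 / 10 * (tn * n) by ring.
have h4 : 0 <= tn * n by apply: mulr_ge0; apply: ltW.
rewrite e3 -!addrA.
have h5 : y + z <= tn * n / 10000 by rewrite -e2; apply: le_trans hyz h3.
have h6 : d * (a + b) <= 2 * (tn * n) + 8 * (gn * n) by rewrite -e1; apply: le_trans h1 h2.
have h7 : 8 * (gn * n) <= 8 * (tn * n / 10000) by rewrite -e2; clear -h3; lra.
set T := tn * n in h4 h5 h6 h7 *.
set Y := y + z in h5 *.
set D := d * (a + b) in h6 *.
set GN := gn * n in h6 h7.
clear -h4 h5 h6 h7; lra.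
Qed.

Lemma core (R : realFieldType) (eps tau g n d a b s t r c r' c' x y z x' z' : R) :
  0 < eps < 1 -> 0 < tau -> tau <= eps / 100 -> 0 < g -> g <= tau ^+ 2 / 100 ->
  0 < n -> d <= n -> (1/4 + eps) * n <= d ->
  r = s + a -> c = s + b -> 0 <= a -> 0 <= b -> 0 <= s -> 0 <= t -> a + b + s + t = n ->
  x + z = d * c -> x + y = d * r -> x <= r * c -> y + z <= g * n ^+ 2 -> 0 <= y -> 0 <= z ->
  x' + z' = d * c' -> x' <= r' * c' -> z' <= g * n ^+ 2 -> r' <= t + b ->
  tau * n <= c -> tau * n <= c' ->
  2 * d * s <= s * s + d * (a + b) + y + z ->
  2 * d * t <= t * t + d * (a + b) + y + z ->
  tau * n <= a /\ tau * n <= b.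
Proof.
move=> /andP [he0 he1] ht0 ht1 hg0 hg1 hn hdn hd hr hc ha hb hs htt hsum hx1 hx2 hx3 hyz hy hz
  hx'1 hx'2 hz' hr' hcn hc'n hS hT.
have htn : 0 < tau * n by apply: mulr_gt0.
have hgn0 : 0 < g * n by apply: mulr_gt0.
have hen : tau * n <= eps * n / 100.
  have := ler_wpM2r (ltW hn) ht1; rewrite mulrAC; clear; lra.
have hen0 : 0 <= eps * n by apply: mulr_ge0; apply: ltW.
have htn1 : tau * n <= n / 100.
  have h : eps * n <= 1 * n by apply: ler_wpM2r; apply: ltW.
  clear -h hen; lra.
have hgt : g * n <= tau * (tau * n) / 100.
  have := ler_wpM2r (ltW hn) hg1; rewrite expr2 mulrAC -mulrA; clear; lra.
have htt1 : tau * (tau * n) <= tau * n / 100.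
  have h : tau * (tau * n) <= 1 / 100 * (tau * n).
    apply: ler_wpM2r; first exact: ltW.
    clear -ht1 he1; lra.
  clear -h; lra.
have hgn : g * n <= tau * n / 10000 by clear -hgt htt1; lra.
have hd' : n / 4 + eps * n <= d.
  have e : (1/4 + eps) * n = n / 4 + eps * n by ring.
  by rewrite -e.
have hn4 : n / 4 <= d by clear -hd' hen0; lra.
have hdb : d * c - d * r = z - y by clear -hx1 hx2; lra.
have hdba : d * (b - a) = z - y by rewrite -hdb hc hr; ring.
have hdab : d * (a - b) = y - z.
  have e : d * (a - b) = - (d * (b - a)) by ring.
  by rewrite e hdba opprB.
have hyz' : y + z <= (g * n) * n by rewrite -mulrA -expr2.
have hyz2 : z + y <= (g * n) * n by rewrite addrC.
have hBA := stepAB hn hn4 hdba hy hz hyz'.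
have hAB := stepAB hn hn4 hdab hz hy hyz2.
set m := tau * n + 4 * (g * n).
have hm : a < m -> b < m -> False.
  move=> hA hB.
  have hR := stepR ht0 (ltW hg0) hn hcn hx1 hx3 (le_trans (ler_wpDl hy (lexx z)) hyz).
  have hR' := stepR ht0 (ltW hg0) hn hc'n hx'1 hx'2 hz'.
  have hR2 : tau * d - g * n <= tau * (t + b).
    apply: (le_trans hR'); apply: ler_wpM2l => //; exact: ltW.
  have hs1 := stepLow ht0 hR hgt hr.
  have ht1' := stepLow ht0 hR2 hgt (erefl (t + b)).
  have hs5 : n / 5 <= s by clear -hs1 hA hn4 htn1 hgn hn; rewrite /m in hA; lra.
  have ht5 : n / 5 <= t by clear -ht1' hB hn4 htn1 hgn hn; rewrite /m in hB; lra.
  have herr := stepErr hn htn hdn ha hb hA hB (erefl m) hgn hyz'.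
  have hs2 : 2 * d - 21 / 2 * tau * n <= s.
    apply: (stepS ht0 hn hs5 (err := d * (a + b) + y + z)).
      by rewrite !addrA.
    by move: herr; rewrite !mulrA.
  have ht2 : 2 * d - 21 / 2 * tau * n <= t.
    apply: (stepS ht0 hn ht5 (err := d * (a + b) + y + z)).
      by rewrite !addrA.
    by move: herr; rewrite !mulrA.
  rewrite -mulrA in hs2 ht2.
  clear -hs2 ht2 hsum ha hb hd' hen htn.
  lra.
have hgn4 : 0 <= 4 * (g * n) by clear -hgn0; lra.
split; rewrite leNgt; apply/negP => h; apply: hm; rewrite /m; clear -h hBA hAB hgn4; lra.
Qed.


Unset Implicit Arguments.

Theorem proposition3p11 (R : realFieldType) :
  forall eps : R, 0 < eps < 1 ->
  exists tau0 : R, 0 < tau0 /\ forall tau : R, 0 < tau <= tau0 ->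
  exists gam0 : R, 0 < gam0 /\ forall gam : R, 0 < gam <= gam0 ->
  forall (n k d : nat) (G : rel 'I_n) (V : 'I_k -> 'I_k -> {set 'I_n}),
    1 / n%:R < gam ->
    (2 <= k)%N ->
    oriented G ->
    regular G d ->
    (1 / 4 + eps) * n%:R <= d%:R ->
    ktg_partition tau gam G V ->
    forall i : 'I_k,
      tau * n%:R <= #|\bigcup_(j < k | j != i) V i j|%:R /\
      tau * n%:R <= #|\bigcup_(j < k | j != i) V j i|%:R.
Proof.
move=> eps heps; have /andP [he0 he1] := heps.
exists (eps / 100); split; first by apply: divr_gt0.
move=> tau /andP [ht0 ht1].
exists (tau ^+ 2 / 100); split; first by apply: divr_gt0 => //; apply: exprn_gt0.
move=> g /andP [hg0 hg1] n k d G V _ hk hor hreg hd [hp hbad hrow hcol] i.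
have [n0|npos] := posnP n.
  have -> : n%:R = 0 :> R by rewrite n0.
  by rewrite mulr0; split; apply: ler0n.
have hdn : (d <= n)%N.
  have [e _] := hreg (Ordinal npos); rewrite -e /outdeg.
  by apply: leq_trans (max_card _) _; rewrite card_ord.
have k1 : (1 < k)%N by [].
have k0 : (0 < k)%N by apply: ltnW.
pose i' : 'I_k := if val i == 0%N then Ordinal k1 else Ordinal k0.
have hii' : i != i'.
  have : val i != val i'.
    by rewrite /i'; case: (val i =P 0%N) => h /=; [rewrite h | apply/eqP].
  by apply: contra_neq => ->.
rewrite (diff_row i hp) (diff_col i hp).
set Rw := Vrow V i; set C := Vcol V i; set Rw' := Vrow V i'; set C' := Vcol V i'.
have hsR := cardsID C Rw.
have hsC := cardsID Rw C.
have hU := cardsUI Rw C.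
have hTc := cardsC (Rw :|: C); rewrite card_ord in hTc.
have hIC : C :&: Rw = Rw :&: C by rewrite setIC.
rewrite hIC in hsC.
have hx1 : (E G Rw C + E G (~: Rw) C = d * #|C|)%N.
  by rewrite -(E_inT C hreg) (E_split_l G [set: 'I_n] C Rw) setTI setTD.
have hx2 : (E G Rw C + E G Rw (~: C) = d * #|Rw|)%N.
  by rewrite -(E_outT Rw hreg) (E_split_r G Rw [set: 'I_n] C) setTI setTD.
have hx3 := E_le_card G Rw C.
have hyz := E_bad G i hp.
have hx'1 : (E G Rw' C' + E G (~: Rw') C' = d * #|C'|)%N.
  by rewrite -(E_inT C' hreg) (E_split_l G [set: 'I_n] C' Rw') setTI setTD.
have hx'2 := E_le_card G Rw' C'.
have hz' : (E G (~: Rw') C' <= #|bad_edges V G|)%N.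
  have := E_bad G i' hp; rewrite -/Rw' -/C'; lia.
have hr' : (#|Rw'| <= #|~: (Rw :|: C)| + #|C :\: Rw|)%N.
  apply: leq_trans (leq_card_setU _ _).1.
  apply: subset_leq_card; apply/subsetP => x hx.
  have hxR : x \notin Rw by apply/negP => hxR; apply: (rows_disj hp hii' hxR hx).
  move: hxR; rewrite !inE; by case: (x \in Rw); case: (x \in C).
have hS := deg_S Rw C hor hreg.
have hT := deg_T Rw C hor hreg.
apply: (@core R eps tau g n%:R d%:R _ _ (#|Rw :&: C|%:R) (#|~: (Rw :|: C)|%:R)
  (#|Rw|%:R) (#|C|%:R) (#|Rw'|%:R) (#|C'|%:R) (E G Rw C)%:R (E G Rw (~: C))%:R
  (E G (~: Rw) C)%:R (E G Rw' C')%:R (E G (~: Rw') C')%:R) => //.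
- by rewrite ltr0n.
- by rewrite ler_nat.
- by rewrite -natrD hsR.
- by rewrite -natrD hsC.
- by rewrite -!natrD; congr (_%:R); lia.
- by rewrite -natrD -natrM hx1.
- by rewrite -natrD -natrM hx2.
- by rewrite -natrM ler_nat.
- by rewrite -natrD; apply: le_trans hbad; rewrite ler_nat.
- by rewrite -natrD -natrM hx'1.
- by rewrite -natrM ler_nat.
- by apply: le_trans hbad; rewrite ler_nat.
- by rewrite -natrD ler_nat.
- exact: hcol i.
- exact: hcol i'.
- by move: hS; rewrite -(ler_nat R) !(natrD, natrM).
- by move: hT; rewrite -(ler_nat R) !(natrD, natrM).
Qed.
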